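(* Let $p\in\mathcal P$ be such that $\mu(p^r)\le\mu(p)$. Then: (i) $D_{\mu(p)}(p)\cap D_{\mu(p^r)}(p^r)\subseteq\mathrm I(\Gamma_{\mu(p)}(p))$; in particular, if $\Gamma_{\mu(p)}(p)$ is connected, then $D_{\mu(p)}(p)\cap D_{\mu(p^r)}(p^r)=\varnothing$. (ii) If $|D_{\mu(p)}(p)|=1$ and $\Gamma_{\mu(p)}(p)$ is acyclic, then $D_{\mu(p)}(p)\cap D_{\mu(p^r)}(p^r)=\varnothing$.
   Context: Let $n,h\ge2$, $N=\{1,\dots,n\}$, $H=\{1,\dots,h\}$, $\mathcal P$ the set of $h$-tuples of linear orders on $N$, $p^r$ the profile obtained by reversing each order; $x>_{p_i}y$ means $x\neq y$ and $p_i$ ranks $x$ above $y$; for an integer $\mu\in(h/2,h]$, $x>^p_\mu y$ means $|\{i: x>_{p_i}y\}|\ge\mu$; $D_\mu(p)=\{x\in N: \forall y,\ |\{i: y>_{p_i}x\}|<\mu\}$; $\mu(p)=\min\{\mu\in\mathbb N\cap(h/2,h]: D_\mu(p)\ne\varnothing\}$. $\Gamma_\mu(p)$ is the directed graph $(N,\{(x,y): x>^p_\mu y\})$. For a directed graph, $\mathrm I$ is the set of isolated vertices (no arc in or out); connected means the underlying undirected graph is connected; acyclic means it contains no directed cycle (on $l\ge2$ distinct vertices) as a subgraph. *)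

(* Defs.v *)
From mathcomp Require Import all_boot.
Set Implicit Arguments. Unset Strict Implicit. Unset Printing Implicit Defensive.

(* Alternatives N = {1..n} are modelled by 'I_n, voters H = {1..h} by 'I_h. *)
Section Defs.
Variables (n h : nat).

(* A linear order, as a (weak, reflexive) relation: x is ranked at least as high as y. *)
Definition linear_order (T : finType) (r : rel T) : Prop :=
  [/\ reflexive r, antisymmetric r, transitive r & total r].

Definition profile := 'I_h -> rel 'I_n.

Definition is_profile (p : profile) : Prop := forall i, linear_order (p i).

Definition rev_profile (p : profile) : profile := fun i x y => p i y x.

Definition beats (p : profile) (i : 'I_h) (x y : 'I_n) : bool := (x != y) && p i x y.

Definition nbeats (p : profile) (x y : 'I_n) : nat := #|[set i | beats p i x y]|.

Definition maj (mu : nat) (p : profile) (x y : 'I_n) : bool := mu <= nbeats p x y.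

Definition Dset (mu : nat) (p : profile) : {set 'I_n} :=
  [set x | [forall y, nbeats p y x < mu]].

Definition quota (mu : nat) : bool := (h < mu.*2) && (mu <= h).

(* mu(p) = min {mu in N cap (h/2,h] : D_mu(p) <> emptyset}; the candidates are
   scanned in increasing order, default h (never used: D_h(p) is nonempty). *)
Definition mu_of (p : profile) : nat :=
  head h [seq m <- iota 0 h.+1 | quota m && (Dset m p != set0)].

Definition Gamma (mu : nat) (p : profile) : rel 'I_n := maj mu p.

Definition isolated (T : finType) (e : rel T) : {set T} :=
  [set x | [forall y, ~~ e x y && ~~ e y x]].

Definition graph_connected (T : finType) (e : rel T) : Prop :=
  forall x y, connect (fun a b => e a b || e b a) x y.

Definition graph_acyclic (T : finType) (e : rel T) : Prop :=
  forall s : seq T, uniq s -> 2 <= size s -> ~~ cycle e s.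

End Defs.

(* Main.v *)
Require Import Defs.
From mathcomp Require Import all_boot.

Lemma iterP (T : Type) (P : T -> Prop) (f : T -> T) :
  (forall y, P y -> P (f y)) -> forall i y, P y -> P (iter i f y).
Proof. by move=> Pf; elim=> //= i IH y Py; apply/Pf/IH. Qed.

Lemma fin_cycle (T : finType) (P : pred T) (f : T -> T) (e : rel T) y0 :
  P y0 -> (forall y, P y -> P (f y)) -> (forall y, P y -> f y != y) ->
  (forall y, P y -> e (f y) y) ->
  exists s, [/\ uniq s, 2 <= size s & cycle e s].
Proof.
move=> Py0 Pf fne fe.
have := looping_order f y0; rewrite /looping => /trajectP [k Hk Hz].
set m := order f y0 in Hk Hz.
set w := iter k f y0.
have Pw : P w by exact: (@iterP T (fun y => P y) f Pf k y0 Py0).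
have Hw : iter (m - k) f w = w by rewrite /w -iterD subnK // ltnW.
have cw : fconnect f (f w) w.
  have := fconnect_iter f (m - k).-1 (f w).
  by rewrite -iterSr prednK ?subn_gt0 // Hw.
move: (cw); rewrite fconnect_f => cyc.
have Porb : all P (orbit f w).
  apply/allP => y; rewrite -fconnect_orbit => /iter_findex <-; exact: (@iterP T (fun y => P y) f Pf _ w Pw).
exists (rev (orbit f w)); split.
- by rewrite rev_uniq orbit_uniq.
- rewrite size_rev size_orbit.
  have := order_gt0 f w; case Ho: (order f w) => [|[|o]] //= _.
  move: cyc; rewrite /orbit Ho /= andbT => /eqP; move: (fne w Pw) => /eqP //.
- rewrite rev_cycle; apply: (sub_in_cycle (P := P) _ Porb cyc).
  by move=> a b Pa Pb /= /eqP <-; apply: fe.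
Qed.

Lemma nbeats_rev n h (p : profile n h) x y :
  nbeats (rev_profile p) y x = nbeats p x y.
Proof. by rewrite /nbeats; apply: eq_card => i; rewrite !inE /beats eq_sym. Qed.

Lemma nbeats_refl n h (p : profile n h) y : nbeats p y y = 0.
Proof.
rewrite /nbeats; apply/eqP; rewrite cards_eq0; apply/eqP/setP => i.
by rewrite !inE /beats eqxx.
Qed.

Theorem lemma5 (n h : nat) (p : profile n h) :
  2 <= n -> 2 <= h -> is_profile p ->
  mu_of (rev_profile p) <= mu_of p ->
  let D := Dset (mu_of p) p :&: Dset (mu_of (rev_profile p)) (rev_profile p) in
  let G := Gamma (mu_of p) p in
  [/\ D \subset isolated G,
      (graph_connected G -> D = set0) &
      (#|Dset (mu_of p) p| = 1 -> graph_acyclic G -> D = set0)].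
Proof.
move=> n2 h2 prof Hmu D G.
have iso : D \subset isolated G.
  apply/subsetP => x; rewrite !inE => /andP[/forallP H1 /forallP H2].
  apply/forallP => y; rewrite /G /Gamma /maj -!ltnNge H1 andbT.
  by move: (H2 y); rewrite nbeats_rev => /leq_trans; apply.
have isoP : forall x y, x \in D -> ~~ G x y && ~~ G y x.
  by move=> x y /(subsetP iso); rewrite inE => /forallP.
have other : forall x : 'I_n, exists y, y != x.
  move=> x; have a0 : 0 < n by apply: leq_trans n2.
  pose a := Ordinal a0; pose b := Ordinal n2.
  case: (eqVneq x a) => [->|]; last by exists a; rewrite eq_sym.
  by exists b.
split => //.
- move=> Hc; apply/eqP; rewrite -subset0; apply/subsetP => x Dx; exfalso.
  have [y yx] := other x.
  move: (Hc x y) => /connectP [[|z s] /=].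
    by move=> _ eyx; move: yx; rewrite eyx eqxx.
  by case/andP => /orP[] Hz _ _; move: (isoP x z Dx); rewrite Hz // andbF.
- move=> c1 acyc; apply/eqP; rewrite -subset0; apply/subsetP => x Dx; exfalso.
  have Dx1 : x \in Dset (mu_of p) p by move: Dx; rewrite inE => /andP[].
  have [x' Ex'] := cards1P (introT eqP c1).
  move: (Dx1); rewrite Ex' inE => /eqP ex'; subst x'.
  have mu0 : 0 < mu_of p.
    by move: Dx1; rewrite inE => /forallP /(_ x); apply: leq_trans.
  have nD : forall y, y != x -> exists z, G z y.
    move=> y yx; have : y \notin Dset (mu_of p) p by rewrite Ex' inE.
    rewrite inE negb_forall => /existsP [z Hz]; exists z.
    by rewrite /G /Gamma /maj leqNgt.
  pose f y := odflt y [pick z | G z y].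
  have fG : forall y, y != x -> G (f y) y.
    move=> y yx; rewrite /f; case: pickP => [z Hz //|none].
    by have [z Hz] := nD y yx; move: (none z); rewrite Hz.
  have [y0 y0x] := other x.
  have k1 : forall y, y != x -> f y != x.
    move=> y yx; apply/eqP => fyx; move: (fG y yx); rewrite fyx => Hxy.
    by move: (isoP x y Dx); rewrite Hxy.
  have k2 : forall y, y != x -> f y != y.
    move=> y yx; apply/eqP => fyy; move: (fG y yx); rewrite fyy.
    by rewrite /G /Gamma /maj nbeats_refl leqNgt mu0.
  have [s [us ss cs]] := @fin_cycle _ (fun y => y != x) f G y0 y0x k1 k2 fG.
  by move: (acyc s us ss); rewrite cs.
Qed.
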